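(* There exist $\mathtt r_0,\mathtt c_*>0$ such that, for any $0<\mathtt r\le\mathtt r_0$ and any choice of tangential sites $S^+=\{\overline{\jmath}_1,\dots,\overline{\jmath}_\nu\}\in\mathcal V(\mathtt r)$, the $\nu\times\nu$ matrix $$\mathbb A:=\frac12\mathbb D\,\mathrm{diag}\Big(\frac{\lambda(2j)}{2\lambda(j)-\lambda(2j)}\Big)_{j\in S^+}+\mathbb D\,\mathbb B,\qquad \mathbb D:=\mathrm{diag}(\lambda(j))_{j\in S^+},$$ with $\mathbb B_j^k=\mathtt b_{jk}$ for $j\ne k$ and $\mathbb B_j^j=0$, where $$\mathtt b_{jk}=\frac23\frac{(1+k^2)(1+j^2)(2+k^2+j^2)}{(3+k^2+j^2+kj)(3+k^2+j^2-kj)},$$ satisfies $|\det\mathbb A|\ge\mathtt c_*\,\overline{\jmath}_1^{\,3\nu}$.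
   Context: $\nu\ge2$ is fixed, $\lambda(j)=j\frac{4+j^2}{1+j^2}$. For $\mathtt r\in(0,1)$, a set $S^+=\{\overline{\jmath}_1,\dots,\overline{\jmath}_\nu\}$ of $\nu$ distinct positive integers with $\overline{\jmath}_1=\max_i\overline{\jmath}_i$ belongs to $\mathcal V(\mathtt r)$ if $\min_i\overline{\jmath}_i>1/\mathtt r$, $|\overline{\jmath}_i/\overline{\jmath}_1-1|\le\mathtt r$ for all $i$, and $\sum_i\frac{\overline{\jmath}_i}{1+\overline{\jmath}_i^2}\ell_i\ne0$ for all $\ell\in\mathbb{Z}^\nu$ with $\sum_i|\ell_i|=4$. The rows and columns of $\mathbb A$ are indexed by $S^+$. *)

(* Defs.v *)
From mathcomp Require Import all_boot all_order all_algebra.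
Set Implicit Arguments. Unset Strict Implicit. Unset Printing Implicit Defensive.
Import Order.TTheory GRing.Theory Num.Theory.
Local Open Scope ring_scope.

Definition lam {R : realFieldType} (j : R) : R := j * (4 + j ^+ 2) / (1 + j ^+ 2).

Definition bcoef {R : realFieldType} (j k : R) : R :=
  (2 / 3) * ((1 + k ^+ 2) * (1 + j ^+ 2) * (2 + k ^+ 2 + j ^+ 2))
  / ((3 + k ^+ 2 + j ^+ 2 + k * j) * (3 + k ^+ 2 + j ^+ 2 - k * j)).

(* The tangential sites S^+ are listed by an injective map s : 'I_nu -> nat;
   jbar1 is their maximum. *)
Definition jbar1 (nu : nat) (s : 'I_nu -> nat) : nat := \max_(i < nu) s i.

Definition inV {R : realFieldType} (nu : nat) (r : R) (s : 'I_nu -> nat) : Prop :=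
  [/\ injective s,
      (forall i, (0 < s i)%N),
      (forall i, 1 / r < (s i)%:R),
      (forall i, `|(s i)%:R / (jbar1 s)%:R - 1| <= r) &
      (forall l : 'I_nu -> int, \sum_(i < nu) `|l i| = 4 ->
         \sum_(i < nu) ((s i)%:R / (1 + (s i)%:R ^+ 2)) * (l i)%:~R != 0 :> R)].

Definition Dmat {R : realFieldType} (nu : nat) (s : 'I_nu -> nat) : 'M[R]_nu :=
  \matrix_(i, k) (if i == k then lam (s i)%:R else 0).

Definition Emat {R : realFieldType} (nu : nat) (s : 'I_nu -> nat) : 'M[R]_nu :=
  \matrix_(i, k) (if i == k then
       lam (2 * (s i)%:R) / (2 * lam (s i)%:R - lam (2 * (s i)%:R)) else 0).

(* B_j^k = b_{jk} off the diagonal, 0 on it (row j, column k) *)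
Definition Bmat {R : realFieldType} (nu : nat) (s : 'I_nu -> nat) : 'M[R]_nu :=
  \matrix_(i, k) (if i == k then 0 else bcoef (s i)%:R (s k)%:R).

Definition Amat {R : realFieldType} (nu : nat) (s : 'I_nu -> nat) : 'M[R]_nu :=
  (1 / 2) *: (Dmat s *m Emat s) + Dmat s *m Bmat s.

(* Main.v *)
Require Import Defs.
From mathcomp Require Import all_boot all_order all_algebra all_fingroup.
From mathcomp Require Import reals.
From mathcomp Require Import ring lra.
Set Implicit Arguments. Unset Strict Implicit. Unset Printing Implicit Defensive.
Import Order.TTheory GRing.Theory Num.Theory.
Local Open Scope ring_scope.

Definition nearw (R : realFieldType) (w : R) (p : nat) (x : R) :=
  w ^+ p <= x /\ x * w ^+ p <= 1.

Lemma expw_bnd (R : realFieldType) (w : R) p : 0 < w -> w <= 1 -> 0 < w ^+ p /\ w ^+ p <= 1.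
Proof. move=> w0 w1; split; [exact: exprn_gt0 | exact: exprn_ile1 (ltW w0) w1]. Qed.

Lemma nearM (R : realFieldType) (w : R) p q x y : 0 < w -> w <= 1 ->
  nearw w p x -> nearw w q y -> nearw w (p + q) (x * y).
Proof.
move=> w0 w1 [h1 h2] [h3 h4]; have [a0 a1] := expw_bnd p w0 w1.
have [b0 b1] := expw_bnd q w0 w1.
rewrite /nearw exprD; set a := w ^+ p in h1 h2 a0 a1 *; set b := w ^+ q in h3 h4 b0 b1 *.
split; first by nra.
have -> : x * y * (a * b) = (x * a) * (y * b) by ring.
have xa0 : 0 <= x * a by nra.
have yb0 : 0 <= y * b by nra.
nra.
Qed.

Lemma nearV (R : realFieldType) (w : R) p x : 0 < w -> w <= 1 ->
  nearw w p x -> nearw w p x^-1.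
Proof.
move=> w0 w1 [h1 h2]; have [a0 a1] := expw_bnd p w0 w1.
set a := w ^+ p in h1 h2 a0 a1 *.
have x0 : 0 < x by exact: (lt_le_trans a0 h1).
split.
  by rewrite -(ler_pM2r x0) mulVf ?gt_eqF // mulrC.
by rewrite mulrC ler_pdivrMr // mul1r.
Qed.

Lemma nearW (R : realFieldType) (w : R) p q x : 0 < w -> w <= 1 -> (p <= q)%N ->
  nearw w p x -> nearw w q x.
Proof.
move=> w0 w1 pq [h1 h2]; have [a0 a1] := expw_bnd p w0 w1.
have [b0 b1] := expw_bnd (q - p) w0 w1.
rewrite /nearw -(subnKC pq) exprD; set a := w ^+ p in h1 h2 a0 a1 *.
set b := w ^+ (q - p) in b0 b1 *.
split; nra.
Qed.

Lemma near_avg2 (R : realFieldType) (w : R) p x y :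
  nearw w p x -> nearw w p y -> nearw w p ((x + y) / 2).
Proof. move=> [h1 h2] [h3 h4]; split; lra. Qed.

Lemma near_avg3 (R : realFieldType) (w : R) p x y z :
  nearw w p x -> nearw w p y -> nearw w p z -> nearw w p ((x + y + z) / 3).
Proof. move=> [h1 h2] [h3 h4] [h5 h6]; split; lra. Qed.

Lemma near_t (R : realFieldType) (r t c z : R) p : 0 < r -> r < 1 -> 0 <= t -> t <= r ->
  0 <= c -> c * r <= 1 ->
  nearw (1 - r) p z -> nearw (1 - r) p.+1 (c * t ^+ 2 + z).
Proof.
move=> r0 r1 t0 tr c0 cr [h1 h2].
have [a0 a1] : 0 < (1 - r) ^+ p /\ (1 - r) ^+ p <= 1.
  by apply: expw_bnd; lra.
rewrite /nearw exprS; set a := (1 - r) ^+ p in h1 h2 a0 a1 *.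
have ct0 : 0 <= c * t ^+ 2 by rewrite mulr_ge0 // exprn_ge0.
have ar : 0 <= a * r by nra.
split; first by nra.
have : c * t ^+ 2 <= r.
  have : t ^+ 2 <= r ^+ 2 by rewrite lerXn2r // ?nnegrE; lra.
  nra.
nra.
Qed.

Lemma near_x (R : realFieldType) (w x : R) : 0 < w -> w <= x -> x <= 1 -> nearw w 1 x.
Proof. move=> w0 h1 h2; rewrite /nearw expr1; split; nra. Qed.

Lemma near_1 (R : realFieldType) (w : R) : nearw w 0 1.
Proof. by rewrite /nearw expr0 mulr1. Qed.

Lemma bernoulli (R : realFieldType) (r : R) n : 0 <= r -> r <= 1 ->
  1 - n%:R * r <= (1 - r) ^+ n.
Proof.
move=> r0 r1; elim: n => [|n IH]; first by rewrite expr0; lra.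
have [a0 a1] : 0 <= (1 - r) ^+ n /\ (1 - r) ^+ n <= 1.
  by split; [apply: exprn_ge0 | apply: exprn_ile1]; lra.
rewrite exprSr -natr1; nra.
Qed.

Lemma near_close (R : realFieldType) (r x : R) p : 0 <= r -> r <= 1 -> p%:R * r <= 1/2 ->
  nearw (1 - r) p x -> `|x - 1| <= 2 * p%:R * r.
Proof.
move=> r0 r1 pr [h1 h2].
have pr0 : 0 <= p%:R * r by rewrite mulr_ge0.
have b := bernoulli p r0 r1.
set a := (1 - r) ^+ p in h1 h2 b.
have x0 : 0 <= x by lra.
case: (lerP 1 x) => x1.
  have : (x - 1) <= 2 * ((x - 1) * a) by nra.
  nra.
lra.
Qed.
Lemma prod_close (R : realFieldType) n (a b : 'I_n -> R) e : 0 <= e ->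
  (forall i, `|a i| <= 2) -> (forall i, `|b i| <= 2) -> (forall i, `|a i - b i| <= e) ->
  `|\prod_i a i - \prod_i b i| <= n%:R * 2 ^+ n * e.
Proof.
elim: n a b => [|n IH] a b e0 ha hb hab.
  by rewrite !big_ord0 subrr normr0 !mul0r.
rewrite !big_ord_recr /=.
set P := \prod_(i < n) _; set Q := \prod_(i < n) _.
have hPQ : `|P - Q| <= n%:R * 2 ^+ n * e by apply: IH.
have hP : `|P| <= 2 ^+ n.
  rewrite normr_prod; apply: (le_trans (y := \prod_(i < n) (2 : R))).
    by apply: ler_prod => i _; rewrite normr_ge0 ha.
  by rewrite prodr_const card_ord.
set x := a _; set y := b _.
have hx : `|x - y| <= e by apply: hab.
have hy : `|y| <= 2 by apply: hb.
have -> : P * x - Q * y = P * (x - y) + (P - Q) * y by ring.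
apply: (le_trans (ler_normD _ _)); rewrite !normrM.
have N0 : 0 <= (2 : R) ^+ n by rewrite exprn_ge0.
have h1 : `|P| * `|x - y| <= 2 ^+ n * e by apply: ler_pM.
have h2 : `|P - Q| * `|y| <= (n%:R * 2 ^+ n * e) * 2 by apply: ler_pM.
have Ne : 0 <= 2 ^+ n * e by rewrite mulr_ge0.
rewrite -natr1 exprS; nra.
Qed.

Lemma det_close (R : realFieldType) n (M M0 : 'M[R]_n) e : 0 <= e -> e <= 1 ->
  (forall i j, `|M0 i j| <= 1) -> (forall i j, `|M i j - M0 i j| <= e) ->
  `|\det M - \det M0| <= n`!%:R * (n%:R * 2 ^+ n * e).
Proof.
move=> e0 e1 h0 h.
rewrite /determinant -sumrB.
apply: (le_trans (ler_norm_sum _ _ _)).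
apply: (le_trans (y := \sum_(s : 'S_n) (n%:R * 2 ^+ n * e))).
  apply: ler_sum => s _; rewrite -mulrBr normrM normr_sign mul1r.
  apply: prod_close => // i.
  - have := h i (s i); have := h0 i (s i).
    have := ler_normD (M0 i (s i)) (M i (s i) - M0 i (s i)).
    rewrite addrC subrK; lra.
  - have := h0 i (s i); lra.
rewrite sumr_const card_Sn mulr_natl; lra.
Qed.

Lemma constmx_mul (R : comPzRingType) n (x y : R) :
  @mulmx R n n n (const_mx x) (const_mx y) = const_mx (x * y *+ n).
Proof.
apply/matrixP => i j; rewrite !mxE.
under eq_bigr do rewrite !mxE.
by rewrite sumr_const card_ord.
Qed.

Definition N0mat (R : realFieldType) n : 'M[R]_n :=
  \matrix_(i, k) (if i == k then 2 / 9 else 4 / 9).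

Lemma N0_det (R : realFieldType) n : (0 < n)%N -> \det (N0mat R n) != 0.
Proof.
move=> n0.
have n1 : (1 <= n%:R :> R) by rewrite ler1n.
set d : R := 9 / (2 * n%:R - 1).
have hd : d * (2 * n%:R - 1) = 9 by rewrite /d mulfVK //; apply/eqP => /eqP; lra.
have E1 : N0mat R n = const_mx (4/9) + (- (2/9))%:M.
  apply/matrixP => i j; rewrite !mxE; case: eqP => _ /=; lra.
pose H : 'M[R]_n := const_mx d + (- (9/2))%:M.
have : N0mat R n *m H = 1%:M.
  rewrite E1 /H mulmxDl !mulmxDr constmx_mul mul_mx_scalar !mul_scalar_mx.
  apply/matrixP => i j; rewrite !mxE -mulr_natr.
  case: eqP => _ /=; rewrite ?mulr1n ?mulr0n; lra.
move/(congr1 determinant); rewrite det_mulmx det1 => h.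
by apply/eqP => h0; move: h; rewrite h0 mul0r; apply/eqP; rewrite eq_sym oner_eq0.
Qed.
Lemma diag_id (R : realFieldType) (j J : R) : 0 < j -> 0 < J ->
  J ^-1 ^+ 3 * ((1/2) * (lam j * (lam (2 * j) / (2 * lam j - lam (2 * j))))) =
  (2/9) * ((j / J)^-1 * (4 * J^-1 ^+ 2 + (j / J) * (j / J)) * (1 * J^-1 ^+ 2 + (j / J) * (j / J))).
Proof.
move=> j0 J0.
have h1 : 1 + j ^+ 2 != 0 by apply/lt0r_neq0; nra.
have h2 : 1 + (2 * j) ^+ 2 != 0 by apply/lt0r_neq0; nra.
have h3 : 2 * lam j - lam (2 * j) = 18 * j ^+ 3 / ((1 + j ^+ 2) * (1 + (2 * j) ^+ 2)).
  rewrite /lam; field; by rewrite h1 h2.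
have h4 : 18 * j ^+ 3 != 0 by apply/lt0r_neq0; rewrite mulr_gt0 // exprn_gt0.
rewrite h3 /lam; field.
rewrite h1 h2 (gt_eqF j0) (gt_eqF J0) /=.
by [].
Qed.

Lemma off_id (R : realFieldType) (j k J : R) : 0 < j -> 0 < k -> 0 < J ->
  let t := J^-1 in let x := j / J in let y := k / J in
  J ^-1 ^+ 3 * (lam j * bcoef j k) =
  (4/9) * (x * (4 * t ^+ 2 + x * x) * (1 * t ^+ 2 + y * y) * (1 * t ^+ 2 + (x * x + y * y) / 2)
     / ((1 * t ^+ 2 + (x * x + y * y + x * y) / 3) * (3 * t ^+ 2 + (x * x + y * y - x * y)))).
Proof.
move=> j0 k0 J0 t x y; rewrite /t /x /y.
have h1 : 1 + j ^+ 2 != 0 by apply/lt0r_neq0; nra.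
rewrite /lam /bcoef; field.

by apply/and4P; split; rewrite ?(gt_eqF J0) //; apply/lt0r_neq0; nra.
Qed.

Lemma Amat_E (R : realFieldType) nu (s : 'I_nu -> nat) i k :
  Amat (R := R) s i k = if i == k then
    (1/2) * (lam (s i)%:R * (lam (2 * (s i)%:R) / (2 * lam (s i)%:R - lam (2 * (s i)%:R))))
  else lam (s i)%:R * bcoef (s i)%:R (s k)%:R.
Proof.
have hD : Dmat (R := R) s = diag_mx (\row_i lam (s i)%:R).
  by apply/matrixP => a b; rewrite !mxE; case: eqP => [->|_]; rewrite ?mulr1n ?mulr0n.
rewrite /Amat hD !mul_diag_mx !mxE; case: eqP => [->|_]; rewrite ?mulr0 ?addr0 ?add0r //.

Qed.

Lemma near_xy (R : realFieldType) (w x y : R) : 0 < w -> w <= 1 -> 0 <= x -> x <= 1 -> 0 <= y -> y <= 1 ->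
  nearw w 2 (x * y) -> nearw w 2 (x * x + y * y - x * y).
Proof.
move=> w0 w1 x0 x1 y0 y1 [h1 h2].
have [a0 a1] := expw_bnd 2 w0 w1.
rewrite /nearw; set a := w ^+ 2 in h1 h2 a0 a1 *.
have hb : x * x + y * y - x * y <= 1.
  case: (lerP x y) => xy; nra.
have hc : x * y <= x * x + y * y - x * y.
  have : 0 <= (x - y) * (x - y) by rewrite -expr2 sqr_ge0.
  nra.
split; first lra.
have hc0 : 0 <= x * x + y * y - x * y by nra.
nra.
Qed.

Theorem lemma4p1 (R : realType) (nu : nat) (hnu : (2 <= nu)%N) :
  exists r0 cstar : R, 0 < r0 /\ 0 < cstar /\
    forall (r : R) (s : 'I_nu -> nat), 0 < r -> r <= r0 -> inV r s ->
      cstar * ((jbar1 s)%:R ^+ (3 * nu)) <= `|\det (Amat (R := R) s)|.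
Proof.
have nu0 : (0 < nu)%N by apply: leq_trans hnu.
set N0 := N0mat R nu.
set dl := `|\det N0|.
have dl0 : 0 < dl by rewrite normr_gt0 N0_det.
set K : R := nu`!%:R * (nu%:R * 2 ^+ nu).
have K0 : 0 < K by rewrite !mulr_gt0 ?ltr0n ?fact_gt0 ?exprn_gt0.
exists (Num.min (1/32) (dl / (64 * K))), (dl / 2).
split; first by rewrite lt_min; apply/andP; split; [lra | rewrite divr_gt0 // mulr_gt0].
split; first by rewrite divr_gt0.
move=> r s r0 rr0 [sinj spos srinv srel snd].
have r132 : r <= 1/32 by move: rr0; rewrite le_min => /andP[].
have rK : r <= dl / (64 * K) by move: rr0; rewrite le_min => /andP[].
set J : R := (jbar1 s)%:R.
have hJ : forall i, (s i <= jbar1 s)%N by move=> i; exact: leq_bigmax.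
pose i0 : 'I_nu := Ordinal nu0.
have J1 : 1 / r < J by apply: (lt_le_trans (srinv i0)); rewrite ler_nat.
have rinv0 : 0 < 1 / r by rewrite divr_gt0.
have J0 : 0 < J by apply: lt_trans J1.
set t := J^-1.
have t0 : 0 < t by rewrite invr_gt0.
have tr : t < r.
  move: J1; rewrite ltr_pdivrMr // /t -[J^-1]div1r ltr_pdivrMr //; lra.
have hx : forall i, 1 - r <= (s i)%:R / J /\ (s i)%:R / J <= 1.
  move=> i; split; last by rewrite ler_pdivrMr // mul1r ler_nat.
  by have := srel i; rewrite ler_norml; lra.
have sp : forall i, 0 < (s i)%:R :> R by move=> i; rewrite ltr0n.
have w0 : 0 < 1 - r by lra.
have w1 : 1 - r <= 1 by lra.
have nx : forall i, nearw (1 - r) 1 ((s i)%:R / J).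
  by move=> i; have [? ?] := hx i; apply: near_x.
have nxy : forall i k, nearw (1 - r) 2 ((s i)%:R / J * ((s k)%:R / J)).
  by move=> i k; apply: (nearM (p := 1) (q := 1)).
have nt : forall c p z, 0 <= c -> c <= 4 -> nearw (1 - r) p z ->
    nearw (1 - r) p.+1 (c * t ^+ 2 + z).
  by move=> c p z c0 c4 hz; apply: near_t => //; nra.
set N := t ^+ 3 *: Amat (R := R) s.
have hent : forall i k, `|N i k - N0 i k| <= 32 * r.
  move=> i k; rewrite /N /N0 mxE Amat_E /N0mat mxE.
  have [xi0 xi1] := hx i; have [xk0 xk1] := hx k.
  case: (boolP (i == k)) => [/eqP eik|nik]; last first.
  rewrite off_id //=.
  set x := (s i)%:R / J; set y := (s k)%:R / J.
  have nxx : nearw (1 - r) 2 (x * x) := nxy i i.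
  have nyy : nearw (1 - r) 2 (y * y) := nxy k k.
  have nxk : nearw (1 - r) 2 (x * y) := nxy i k.
  have f1 : nearw (1 - r) 3 (4 * t ^+ 2 + x * x) by apply: (nt _ _ _ _ _ nxx); lra.
  have f2 : nearw (1 - r) 3 (1 * t ^+ 2 + y * y) by apply: (nt _ _ _ _ _ nyy); lra.
  have f3 : nearw (1 - r) 3 (1 * t ^+ 2 + (x * x + y * y) / 2).
    by apply: (nt _ _ _ _ _ (near_avg2 nxx nyy)); lra.
  have g1 : nearw (1 - r) 3 (1 * t ^+ 2 + (x * x + y * y + x * y) / 3).
    by apply: (nt _ _ _ _ _ (near_avg3 nxx nyy nxk)); lra.
  have g2 : nearw (1 - r) 3 (3 * t ^+ 2 + (x * x + y * y - x * y)).
    have x01 : 0 <= x /\ x <= 1 by move: (hx i); rewrite -/x; lra.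
    have y01 : 0 <= y /\ y <= 1 by move: (hx k); rewrite -/y; lra.
    case: x01 y01 => [? ?] [? ?].
    by apply: (nt _ _ _ _ _ (near_xy _ _ _ _ _ _ nxk)) => //; lra.
  have hF : nearw (1 - r) 16 (x * (4 * t ^+ 2 + x * x) * (1 * t ^+ 2 + y * y) *
      (1 * t ^+ 2 + (x * x + y * y) / 2) /
      ((1 * t ^+ 2 + (x * x + y * y + x * y) / 3) * (3 * t ^+ 2 + (x * x + y * y - x * y)))).
    apply: (nearM (p := 10) (q := 6)) => //.
      apply: (nearM (p := 7)) => //; apply: (nearM (p := 4)) => //.
      by apply: (nearM (p := 1)) => //; exact: nx.
    by apply: nearV => //; apply: (nearM (p := 3)).
  have := near_close (ltW r0) (_ : r <= 1) (_ : 16%:R * r <= 1/2) hF.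
  have : 16%:R = 16 :> R by [].
  move=> -> h; have /h {}h : r <= 1 by lra.
  have /h {}h : 16 * r <= 1/2 by lra.
  set F := (X in `|X - 1|) in h *.
  have -> : 4 / 9 * F - 4 / 9 = 4 / 9 * (F - 1) by ring.
  rewrite normrM ger0_norm; lra.
  subst k.
    rewrite diag_id //.
    set x := (s i)%:R / J.
    have n1 : nearw (1 - r) 1 x^-1 by apply: nearV => //; exact: nx.
    have n3a : nearw (1 - r) 3 (4 * t ^+ 2 + x * x) by apply: (nt _ _ _ _ _ (nxy i i)); lra.
    have n3b : nearw (1 - r) 3 (1 * t ^+ 2 + x * x) by apply: (nt _ _ _ _ _ (nxy i i)); lra.
    have hF : nearw (1 - r) 16 (x^-1 * (4 * t ^+ 2 + x * x) * (1 * t ^+ 2 + x * x)).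
      by apply: (nearW (p := 7)) => //; apply: (nearM (p := 4)) => //; apply: (nearM (p := 1)).
    have := near_close (ltW r0) (_ : r <= 1) (_ : 16%:R * r <= 1/2) hF.
    have : 16%:R = 16 :> R by [].
    move=> -> h; have /h {}h : r <= 1 by lra.
    have /h {}h : 16 * r <= 1/2 by lra.
    have -> : 2 / 9 * (x^-1 * (4 * t ^+ 2 + x * x) * (1 * t ^+ 2 + x * x)) - 2 / 9
      = 2 / 9 * ((x^-1 * (4 * t ^+ 2 + x * x) * (1 * t ^+ 2 + x * x)) - 1) by ring.
    rewrite normrM ger0_norm; lra.
have hN0 : forall i k, `|N0 i k| <= 1.
  by move=> i k; rewrite /N0 /N0mat mxE; case: (i == k); rewrite ger0_norm; lra.
have hd := det_close (ltW (_ : 0 < 32 * r)) (_ : 32 * r <= 1) hN0 hent.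
have /hd {}hd : 0 < 32 * r by lra.
have /hd {}hd : 32 * r <= 1 by lra.
have hKr : nu`!%:R * (nu%:R * 2 ^+ nu * (32 * r)) <= dl / 2.
  have -> : nu`!%:R * (nu%:R * 2 ^+ nu * (32 * r)) = K * (32 * r) by rewrite /K; ring.
  have : K * r <= K * (dl / (64 * K)) by rewrite ler_pM2l.
  have -> : K * (dl / (64 * K)) = dl / 64 by field; apply/lt0r_neq0.
  lra.
have hdN : dl / 2 <= `|\det N|.
  have := ler_normD (\det N - \det N0) (\det N0).
  rewrite subrK -/dl.
  have := normrN (\det N - \det N0); rewrite opprB => e.
  have := ler_normD (\det N0 - \det N) (\det N); rewrite subrK -/dl e.
  lra.
have hA : \det (Amat (R := R) s) = J ^+ (3 * nu) * \det N.
  rewrite /N detZ mulrA -exprM -exprMn /t mulfV ?gt_eqF // expr1n mul1r //.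
rewrite hA normrM (ger0_norm (exprn_ge0 _ (ltW J0))) mulrC.
by rewrite ler_pM2l // exprn_gt0.
Qed.
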